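(* There exists a finite set $C\subseteq\mathbb{M}$ such that $\mathrm{ChrMem}(\mathrm{RL}\cap C^\omega)=+\infty$.
   Context: Let $\Omega=\mathbb{N}\times\{0,1\}$ with partial order $(n,a)\preceq(m,b)$ iff $(n,a)=(m,b)$ or $n<m$. Let $\mathbb{M}$ be the set of all functions $f\colon\Omega\to\Omega$ monotone w.r.t. $\preceq$. The Rope Ladder condition $\mathrm{RL}\subseteq\mathbb{M}^\omega$ consists of all sequences $(f_1,f_2,\ldots)\in\mathbb{M}^\omega$ for which there is $(N,b)\in\Omega$ with $f_n\circ\cdots\circ f_1((0,0))\preceq(N,b)$ for all $n\ge1$. For $C\subseteq\mathbb{M}$, $\mathrm{RL}\cap C^\omega$ is regarded as a winning condition over the color set $C$. An arena over a color set $C$ is a tuple $\langle V_P, V_A, E\rangle$ of finite sets with $V_P\cap V_A=\varnothing$, $V=V_P\cup V_A\neq\varnothing$, $E\subseteq V\times C\times V$, every node having an outgoing edge. Paths are non-empty finite/infinite sequences of consecutive edges, plus $0$-length paths $\lambda_v$ at each node. A Protagonist's strategy maps each finite path ending in $V_P$ to an outgoing edge of its last node; a path is consistent with $S$ if every edge leaving a Protagonist node along it is the one chosen by $S$ on the preceding prefix. $S$ is winning from $u$ w.r.t. $W\subseteq C^\omega$ if every infinite path consistent with $S$ from $u$ has color sequence in $W$; $S$ is optimal w.r.t. $W$ if there is no node from which some strategy wins w.r.t. $W$ but $S$ does not. A memory structure is $\langle M,m_{init},\delta\rangle$ with $M$ finite, $\delta\colon M\times E\to M$ (extended to finite edge sequences);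 it is chromatic if $\delta(m,e_1)=\delta(m,e_2)$ whenever $e_1,e_2$ have the same color. A strategy is built on top of it if its choice after a finite path depends only on the last node and the memory state reached from $m_{init}$ on that path. $\mathrm{ChrMem}(W)$ is the least $k\in\mathbb{Z}^+$ such that every arena over $C$ admits a Protagonist's strategy built on top of a chromatic memory structure with $k$ states that is optimal w.r.t. $W$ ($+\infty$ if none exists). *)

(* Defs.v *)
From mathcomp Require Import all_boot.
Set Implicit Arguments. Unset Strict Implicit. Unset Printing Implicit Defensive.

(* Omega = N x {0,1}; the bit 0 is [false], 1 is [true]. *)
Definition Omega := (nat * bool)%type.

Definition le_Om (x y : Omega) : Prop := x = y \/ (x.1 < y.1)%N.

Definition monotone_Om (f : Omega -> Omega) : Prop :=
  forall x y, le_Om x y -> le_Om (f x) (f y).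

Section Games.
Variable Col : finType.

Definition wincond := (nat -> Col) -> Prop.

(* Rope Ladder condition restricted to C^omega, where the color set C is
   given by the finite type Col together with an injective interpretation
   [col] into monotone maps.  comp c n = f_n o ... o f_1 with f_i = col (c (i-1)). *)
Fixpoint comp (col : Col -> Omega -> Omega) (c : nat -> Col) (n : nat) (x : Omega)
  : Omega :=
  match n with
  | 0 => x
  | n'.+1 => col (c n') (comp col c n' x)
  end.

Definition RL (col : Col -> Omega -> Omega) : wincond :=
  fun c => exists Nb : Omega, forall n, (1 <= n)%N -> le_Om (comp col c n (0, false)) Nb.

Variable V : finType.
Notation edge := (V * Col * V)%type.
Definition esrc (e : edge) : V := e.1.1.
Definition ecol (e : edge) : Col := e.1.2.
Definition etgt (e : edge) : V := e.2.

(* Arena <V_P, V_A, E>: V_P = VP, V_A = complement of VP in V. *)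
Definition arena_ok (E : {set edge}) : Prop :=
  (0 < #|V|)%N /\ forall v : V, exists2 e, e \in E & esrc e = v.

Fixpoint valid_from (E : {set edge}) (u : V) (p : seq edge) : Prop :=
  match p with
  | [::] => True
  | e :: p' => e \in E /\ esrc e = u /\ valid_from E (etgt e) p'
  end.

Definition last_node (u : V) (p : seq edge) : V := last u (map etgt p).

Definition strategy := V -> seq edge -> edge.

Definition is_strategy (VP : {set V}) (E : {set edge}) (S : strategy) : Prop :=
  forall u p, valid_from E u p -> last_node u p \in VP ->
    S u p \in E /\ esrc (S u p) = last_node u p.

Definition inf_path_from (E : {set edge}) (u : V) (e : nat -> edge) : Prop :=
  esrc (e 0) = u /\ forall n, e n \in E /\ etgt (e n) = esrc (e n.+1).

Definition consistent (VP : {set V}) (S : strategy) (u : V) (e : nat -> edge) : Prop :=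
  forall n, esrc (e n) \in VP -> e n = S u (mkseq e n).

Definition winning_from (VP : {set V}) (E : {set edge}) (W : wincond)
  (S : strategy) (u : V) : Prop :=
  forall e, inf_path_from E u e -> consistent VP S u e -> W (fun n => ecol (e n)).

Definition optimal (VP : {set V}) (E : {set edge}) (W : wincond) (S : strategy) : Prop :=
  forall u, (exists2 S', is_strategy VP E S' & winning_from VP E W S' u) ->
    winning_from VP E W S u.

Definition chromatic (M : Type) (E : {set edge}) (delta : M -> edge -> M) : Prop :=
  forall m e1 e2, e1 \in E -> e2 \in E -> ecol e1 = ecol e2 -> delta m e1 = delta m e2.

Definition built_on (M : Type) (VP : {set V}) (E : {set edge}) (minit : M)
  (delta : M -> edge -> M) (S : strategy) : Prop :=
  exists sigma : M -> V -> edge, forall u p, valid_from E u p ->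
    last_node u p \in VP -> S u p = sigma (foldl delta minit p) (last_node u p).

End Games.

Definition chrmem_works (Col : finType) (W : wincond Col) (k : nat) : Prop :=
  forall (V : finType) (VP : {set V}) (E : {set (V * Col * V)}),
    arena_ok E ->
    exists (minit : 'I_k) (delta : 'I_k -> (V * Col * V) -> 'I_k) (S : strategy Col V),
      chromatic E delta /\ is_strategy VP E S /\ built_on VP E minit delta S /\
      optimal VP E W S.

Definition ChrMem_infinite (Col : finType) (W : wincond Col) : Prop :=
  ~ exists k, (0 < k)%N /\ chrmem_works W k.

(* Main.v *)
From HB Require Import structures.
From mathcomp Require Import all_boot zify.
Require Import Defs.
Set Implicit Arguments. Unset Strict Implicit. Unset Printing Implicit Defensive.

Inductive colT := Ca | Cd | Cf | Ct0 | Ct1.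
Definition c2o (c : colT) : 'I_5 := inord (match c with Ca => 0 | Cd => 1 | Cf => 2 | Ct0 => 3 | Ct1 => 4 end).
Definition o2c (o : 'I_5) : colT := match nat_of_ord o with 0 => Ca | 1 => Cd | 2 => Cf | 3 => Ct0 | _ => Ct1 end.
Lemma c2oK : cancel c2o o2c. Proof. by case; rewrite /o2c /c2o inordK. Qed.
HB.instance Definition _ := Equality.copy colT (can_type c2oK).
HB.instance Definition _ := Finite.copy colT (can_type c2oK).

Definition inF (n : nat) : bool := has (fun i => n == 2 ^ i) (iota 0 n.+1).

Lemma inF_pow i : inF (2 ^ i).
Proof. apply/hasP; exists i => //; rewrite mem_iota /= add0n ltnS. exact: ltnW (ltn_expl i (isT : 1 < 2)). Qed.

Lemma inF_not i r : 0 < r < 2 ^ i -> inF (2 ^ i + r) = false.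
Proof.
move=> /andP [r0 ri]; apply/negbTE/hasPn => j _; apply/negP => /eqP E.
have h1 : 2 ^ i < 2 ^ j by rewrite -E; lia.
have h2 : 2 ^ j < 2 ^ i.+1 by rewrite -E expnS; lia.
rewrite ltn_exp2l // in h1; rewrite ltn_exp2l // in h2; lia.
Qed.

Definition mA (x : Omega) : Omega := (x.1.+1, x.2).
Definition mD (x : Omega) : Omega := if 1 < x.1 then (x.1.-1, x.2) else (0, false).
Definition mF (x : Omega) : Omega := (x.1, addb x.2 (inF x.1)).
Definition mT (b : bool) (x : Omega) : Omega :=
  if x.1 == 0 then x else if (x.1 == 1) && (x.2 == b) then x else (x.1.+1, x.2).

Definition col (c : colT) : Omega -> Omega :=
  match c with Ca => mA | Cd => mD | Cf => mF | Ct0 => mT false | Ct1 => mT true end.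

Lemma mT_mono b : monotone_Om (mT b).
Proof.
move=> [n a] [m c] [E|/= lt]; first by left; rewrite E.
rewrite /mT /=.
case: (n =P 0) => h1; case: (m =P 0) => h2; try (right => /=; lia);
case: (n =P 1) => h3; case: (m =P 1) => h4; try (right => /=; lia);
case: (a =P b) => h5; case: (c =P b) => h6; right => /=; lia.
Qed.

Lemma col_mono c : monotone_Om (col c).
Proof.
case: c; try exact: mT_mono;
move=> [n a] [m b] [E|/= lt]; try (by left; rewrite E); rewrite /= /mA /mD /mF /=.
- by right.
- case: ifP => h1; case: ifP => h2 /=; try (right => /=; lia).
  by left.
- by right.
Qed.

Lemma col_inj : injective col.
Proof.
move=> c1 c2 E.
have := congr1 (fun g => (g (0, false), g (1, true))) E.
by case: c1 {E}; case: c2 => //=; rewrite /mF /= /inF /=.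
Qed.
Fixpoint run (X L : Type) (g : X -> L -> X) (c : nat -> L) (n : nat) (x : X) : X :=
  match n with 0 => x | n'.+1 => g (run g c n' x) (c n') end.

Lemma comp_run (Col : finType) (cl : Col -> Omega -> Omega) c n x :
  comp cl c n x = run (fun y l => cl l y) c n x.
Proof. by elim: n => //= n ->. Qed.

Lemma foldl_run (X L : Type) (g : X -> L -> X) c n x :
  foldl g x (mkseq c n) = run g c n x.
Proof. by elim: n => // n IH; rewrite mkseqS foldl_rcons IH. Qed.

Lemma run_ext (X L L' : Type) (g : X -> L -> X) (g' : X -> L' -> X) c c' n x :
  (forall i y, i < n -> g y (c i) = g' y (c' i)) -> run g c n x = run g' c' n x.
Proof.
elim: n => //= n IH H; rewrite IH; first exact: H.
by move=> i y lt; apply: H; lia.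
Qed.

Lemma eq_in_mkseq (T : Type) (f g : nat -> T) n :
  (forall i, i < n -> f i = g i) -> mkseq f n = mkseq g n.
Proof.
move=> H; apply/eq_in_map => i; rewrite mem_iota add0n => /andP [_ lt]; exact: H.
Qed.

Lemma iter_period (T : finType) (g : T -> T) x :
  exists2 p, 0 < p <= #|T| & forall j t, #|T| <= j -> iter (j + t * p) g x = iter j g x.
Proof.
pose h (i : 'I_#|T|.+1) := iter i g x.
have [/existsP [i /existsP [i' /andP [ne /eqP eq]]] | nex] :=
  boolP [exists i, exists i', (i != i') && (h i == h i')]; last first.
  have inj : @injective T 'I_#|T|.+1 h.
    move=> i i' E; apply/eqP; case: (boolP (i == i')) => // ne; exfalso.
    by move/negP: nex; apply; apply/existsP; exists i; apply/existsP; exists i'; rewrite ne E eqxx.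
  by have := leq_card _ inj; rewrite card_ord ltnn.
have key : forall i1 i2 : 'I_#|T|.+1, i1 < i2 -> h i1 = h i2 -> exists2 p, 0 < p <= #|T| &
    forall j t, #|T| <= j -> iter (j + t * p) g x = iter j g x.
  move=> i1 i2 lt E; exists (i2 - i1); first by have := ltn_ord i2; lia.
  move=> j t le; elim: t => [|t IH]; first by rewrite addn0.
  have -> : j + t.+1 * (i2 - i1) = (j - i1 + t * (i2 - i1)) + i2.
    have := ltn_ord i1; lia.
  rewrite iterD; move: E; rewrite /h => <-; rewrite -iterD.
  have -> : j - i1 + t * (i2 - i1) + i1 = j + t * (i2 - i1) by have := ltn_ord i1; lia.
  exact: IH.
case: (ltngtP i i') => [lt|lt|E]; first exact: key lt eq.
  exact: key lt (esym eq).
by move: ne; rewrite (val_inj E) eqxx.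
Qed.

Section PathLemmas.
Lemma mkseq_succ (T : Type) (e : nat -> T) n : mkseq e n.+1 = e 0 :: mkseq (fun i => e i.+1) n.
Proof. by rewrite /mkseq /= -[in LHS](addn0 1) iotaDl -map_comp. Qed.
End PathLemmas.

Lemma valid_mkseq (Col V : finType) (E : {set (V * Col * V)}) u e n :
  inf_path_from E u e -> valid_from E u (mkseq e n).
Proof.
elim: n u e => [|n IH] u e [h0 hn] //.
rewrite mkseq_succ /=; split; first exact: (hn 0).1.
split => //; apply: IH; split; first by rewrite (hn 0).2.
by move=> m; apply: hn.
Qed.

Lemma last_mkseq (Col V : finType) (E : {set (V * Col * V)}) u e n :
  inf_path_from E u e -> last_node u (mkseq e n) = esrc (e n).
Proof.
elim: n u e => [|n IH] u e [h0 hn]; first by rewrite /last_node /= h0.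
rewrite mkseq_succ /last_node /=; have := IH (etgt (e 0)) (fun i => e i.+1); rewrite /last_node => -> //.
split; first by rewrite (hn 0).2.
by move=> m; apply: hn.
Qed.

Definition Vt (M : nat) := ('I_M.+1 + 'I_M.+1 + bool)%type.
Definition nA {M} (i : nat) : Vt M := inl (inl (inord i)).
Definition nD {M} (j : nat) : Vt M := inl (inr (inord j)).
Definition nZ {M} (b : bool) : Vt M := inr b.
Definition tcol (b : bool) : colT := if b then Ct1 else Ct0.

Definition edge_ok M (e : Vt M * colT * Vt M) : bool :=
  let: (v, c, w) := e in
  match v with
  | inl (inl i) => match c with
      | Ca => (i < M) && (w == nA i.+1)
      | Cf => (0 < i) && (w == nD i)
      | _ => false end
  | inl (inr j) => match c with
      | Cd => ((1 < j) && (w == nD j.-1)) || ((j == 0 :> nat) && (w == nD 0))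
      | Ct0 => (j == 1 :> nat) && (w == nZ false)
      | Ct1 => (j == 1 :> nat) && (w == nZ true)
      | _ => false end
  | inr b => match c with
      | Ct0 => ~~ b && (w == nZ b)
      | Ct1 => b && (w == nZ b)
      | _ => false end
  end.

Definition EE M : {set (Vt M * colT * Vt M)} := [set e | edge_ok e].
Definition VPP M : {set Vt M} := [set nD 1].

Lemma nat_inord M i : i <= M -> nat_of_ord (inord i : 'I_M.+1) = i.
Proof. by move=> h; rewrite inordK. Qed.

Lemma nD_inj M i j : i <= M -> j <= M -> (nD i : Vt M) = nD j -> i = j.
Proof.
move=> hi hj [] /(congr1 val) /=; rewrite !inordK //; lia.
Qed.

Lemma arena_okM M : 0 < M -> arena_ok (EE M).
Proof.
move=> M0; split; first by apply/card_gt0P; exists (nZ true).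
case=> [[i|j]|b].
- case: (ltnP i M) => h.
  + exists (inl (inl i), Ca, nA i.+1) => //; by rewrite inE /= h eqxx.
  + exists (inl (inl i), Cf, nD i) => //; rewrite inE /= eqxx andbT; lia.
- case: (ltngtP 1 j) => h.
  + exists (inl (inr j), Cd, nD j.-1) => //; by rewrite inE /= h eqxx.
  + have j0 : nat_of_ord j = 0 by lia.
    exists (inl (inr j), Cd, nD 0) => //; rewrite inE /= j0 /=.
    exact: eqxx.
  + exists (inl (inr j), Ct0, nZ false) => //; by rewrite inE /= -h eqxx.
- exists (inr b, tcol b, nZ b) => //; by case: b; rewrite inE /= eqxx.
Qed.

Definition x0e M : Vt M * colT * Vt M := (nZ true, Ct1, nZ true).

Definition bitof M (p : seq (Vt M * colT * Vt M)) : bool :=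
  (Defs.comp col (fun i => ecol (nth (x0e M) p i)) (size p) (0, false)).2.

Definition Sw M : strategy colT (Vt M) := fun u p => (nD 1, tcol (bitof p), nZ (bitof p)).

Lemma edge_t M b : 0 < M -> (nD 1, tcol b, nZ b) \in EE M.
Proof. by move=> M0; rewrite inE /= nat_inord //; case: b => /=; rewrite eqxx. Qed.

Lemma Sw_strat M : 0 < M -> is_strategy (VPP M) (EE M) (@Sw M).
Proof.
move=> M0 u p _; rewrite inE => /eqP ->; split; first exact: edge_t.
by [].
Qed.

Lemma bitof_mkseq M (e : nat -> Vt M * colT * Vt M) n :
  bitof (mkseq e n) = (Defs.comp col (fun i => ecol (e i)) n (0, false)).2.
Proof.
rewrite /bitof size_mkseq !comp_run; congr (_.2); apply: run_ext => i y lt.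
by rewrite nth_mkseq.
Qed.

Definition Inv M (v : Vt M) (x : Omega) : Prop :=
  match v with
  | inl (inl i) => x = (nat_of_ord i, false)
  | inl (inr j) => x.1 = j
  | inr b => x = (1, b)
  end.

Lemma Sw_win M : 0 < M -> winning_from (VPP M) (EE M) (RL col) (@Sw M) (nA 0).
Proof.
move=> M0 e [h0 hn] cons.
set c := fun n => ecol (e n).
have inv : forall n, Inv (esrc (e n)) (Defs.comp col c n (0, false)).
  elim=> [|n IH]; first by rewrite h0 /= nat_inord.
  have [En Et] := hn n.
  rewrite -Et /= /c; move: En Et IH.
  have cn := cons n.
  case: (e n) cn => [[v cc] w] cn; rewrite inE /esrc /etgt /ecol /= => ok _.
  set x := Defs.comp col c n (0, false).
  case: v cn ok => [[i|j]|b] cn ok /= IH.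
  - case: cc ok cn => //= /andP [h /eqP ->] _.
    + by rewrite IH /= /mA /= nat_inord.
    + by rewrite IH /= /mF /= nat_inord //; have := ltn_ord i; lia.
  - case: cc ok cn => //=.
    + case/orP => /andP [h /eqP ->] _ /=; rewrite /mD IH.
      * by rewrite h /= nat_inord //; have := ltn_ord j; lia.
      * by move/eqP: h => -> /=; rewrite nat_inord.
    + move=> /andP [/eqP j1 _] cn.
      have : (inl (inr j) : Vt M) \in VPP M.
        by rewrite inE; apply/eqP; congr (inl (inr _)); apply: val_inj; rewrite /= nat_inord.
      move/cn; rewrite /Sw bitof_mkseq -/c -/x => [[_ hc ->]].
      case: x IH hc => x1 x2 /= -> hc; rewrite j1; by case: x2 hc.
    + move=> /andP [/eqP j1 _] cn.
      have : (inl (inr j) : Vt M) \in VPP M.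
        by rewrite inE; apply/eqP; congr (inl (inr _)); apply: val_inj; rewrite /= nat_inord.
      move/cn; rewrite /Sw bitof_mkseq -/c -/x => [[_ hc ->]].
      case: x IH hc => x1 x2 /= -> hc; rewrite j1; by case: x2 hc.
  - case: cc ok cn => //= /andP [hb /eqP ->] _; rewrite IH /mT /=.
    + by move/negbTE: hb => ->.
    + by rewrite hb.
exists (M.+1, false) => n _; right => /=.
have := inv n; case: (esrc (e n)) => [[i|j]|b] /= ->; [exact: ltn_ord | exact: ltn_ord | by []].
Qed.

Definition path M N b n : Vt M * colT * Vt M :=
  if n < N then (nA n, Ca, nA n.+1)
  else if n == N then (nA N, Cf, nD N)
  else if n < N.*2 then (nD (N.*2.+1 - n), Cd, nD (N.*2 - n))
  else if n == N.*2 then (nD 1, tcol b, nZ b)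
  else (nZ b, tcol b, nZ b).

Section PathFacts.
Lemma pathA M N b n : n < N -> path M N b n = (nA n, Ca, nA n.+1).
Proof. by move=> h; rewrite /path h. Qed.
Lemma pathN M N b : path M N b N = (nA N, Cf, nD N).
Proof. by rewrite /path ltnn eqxx. Qed.
Lemma pathD M N b n : N < n < N.*2 -> path M N b n = (nD (N.*2.+1 - n), Cd, nD (N.*2 - n)).
Proof.
move=> h; rewrite /path.
have -> : (n < N) = false by lia.
have -> : (n == N) = false by lia.
by have -> : (n < N.*2) = true by lia.
Qed.
Lemma path2 M N b : 0 < N -> path M N b N.*2 = (nD 1, tcol b, nZ b).
Proof.
move=> h; rewrite /path.
have -> : (N.*2 < N) = false by lia.
have -> : (N.*2 == N) = false by lia.
by rewrite ltnn eqxx.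
Qed.
Lemma pathZ M N b n : N.*2 < n -> path M N b n = (nZ b, tcol b, nZ b).
Proof.
move=> h; rewrite /path.
have -> : (n < N) = false by lia.
have -> : (n == N) = false by lia.
have -> : (n < N.*2) = false by lia.
by have -> : (n == N.*2) = false by lia.
Qed.
End PathFacts.

Lemma path_inf M N b : 2 <= N <= M -> inf_path_from (EE M) (nA 0) (path M N b).
Proof.
move=> /andP [N2 NM]; split; first by rewrite pathA //; lia.
move=> n.
have [lt1|ge1] := ltnP n.+1 N.
  rewrite !pathA ?inE /= ?nat_inord ?eqxx ?andbT //; try lia.
  split => //; lia.
have [eq1|ne1] := eqVneq n.+1 N.
  rewrite pathA; last lia.
  rewrite -eq1 pathN inE /= nat_inord ?eqxx; try lia.
  split => //; lia.
have [eq2|ne2] := eqVneq n N.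
  rewrite eq2 pathN pathD ?inE /= ?nat_inord ?eqxx ?andbT /=; try lia.
  split; [lia | by congr (inl (inr (inord _))); lia].
have [lt3|ge3] := ltnP n.+1 N.*2.
  rewrite !pathD ?inE /= ?nat_inord ?eqxx /=; try lia.
  split; last by congr (inl (inr (inord _))); lia.
  apply/orP; left; apply/andP; split; first lia.
  by apply/eqP; congr (inl (inr (inord _))); lia.
have [eq4|ne4] := eqVneq n.+1 N.*2.
  rewrite pathD ?eq4 ?path2 ?inE /= ?nat_inord ?eqxx /=; try lia.
  split; last by congr (inl (inr (inord _))); lia.
  apply/orP; left; apply/andP; split; first lia.
  by apply/eqP; congr (inl (inr (inord _))); lia.
have [eq5|ne5] := eqVneq n N.*2.
  rewrite eq5 path2 ?pathZ; try lia.
  by split => //; apply: edge_t; lia.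
rewrite !pathZ; try lia.
by split => //; case: b; rewrite inE /= eqxx.
Qed.

Lemma path_cons M N b (S : strategy colT (Vt M)) : 2 <= N <= M ->
  S (nA 0) (mkseq (path M N b) N.*2) = (nD 1, tcol b, nZ b) ->
  consistent (VPP M) S (nA 0) (path M N b).
Proof.
move=> /andP [N2 NM] HS n; rewrite inE.
have [lt1|ge1] := ltnP n N; first by rewrite pathA.
have [eq2|ne2] := eqVneq n N; first by rewrite eq2 pathN.
have [lt3|ge3] := ltnP n N.*2.
  rewrite pathD /esrc /=; last lia.
  move/eqP/nD_inj => h; exfalso; have := h ltac:(lia) ltac:(lia); lia.
have [eq5|ne5] := eqVneq n N.*2.
  by rewrite eq5 path2 ?HS //; lia.
by rewrite pathZ //; lia.
Qed.

Definition colseq N n : colT := if n < N then Ca else if n == N then Cf else Cd.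

Lemma path_col M N b n : 2 <= N -> n < N.*2 -> ecol (path M N b n) = colseq N n.
Proof.
move=> N2 h; rewrite /colseq.
have [lt1|ge1] := ltnP n N; first by rewrite pathA.
have [eq2|ne2] := eqVneq n N; first by rewrite eq2 pathN.
by rewrite pathD //; lia.
Qed.

Lemma runS (X L : Type) (g : X -> L -> X) c n x : run g c n.+1 x = g (run g c n x) (c n).
Proof. by []. Qed.

Lemma compS (Col : finType) (cl : Col -> Omega -> Omega) c n x :
  Defs.comp cl c n.+1 x = cl (c n) (Defs.comp cl c n x).
Proof. by []. Qed.

Lemma run_colseq (X : Type) (g : X -> colT -> X) N j x :
  run g (colseq N) (N.+1 + j) x = iter j (fun y => g y Cd) (g (iter N (fun y => g y Ca) x) Cf).
Proof.
have hA : forall n, n <= N -> run g (colseq N) n x = iter n (fun y => g y Ca) x.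
  elim=> [|n IH] h //=; rewrite IH; last lia.
  by rewrite /colseq (_ : n < N); last lia.
elim: j => [|j IH].
  by rewrite addn0 /= hA // /colseq ltnn eqxx.
rewrite addnS runS IH /colseq.
have -> : (N.+1 + j < N) = false by lia.
by have -> : (N.+1 + j == N) = false by lia.
Qed.

Lemma iter_mA n : iter n (fun y => col Ca y) (0, false) = (n, false).
Proof. by elim: n => //= n ->. Qed.

Lemma iter_mD N j c : j < N -> iter j (fun y => col Cd y) (N, c) = (N - j, c).
Proof.
elim: j => [|j IH] h /=; first by rewrite subn0.
rewrite IH; last lia.
rewrite /mD /=; have -> : 1 < N - j by lia.
by congr (_, _); lia.
Qed.

Lemma path_comp2 M N b : 2 <= N ->
  Defs.comp col (fun n => ecol (path M N b n)) N.*2 (0, false) = (1, inF N).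
Proof.
move=> N2; rewrite comp_run.
rewrite (@run_ext _ _ _ _ (fun y l => col l y) _ (colseq N)); last first.
  by move=> i y lt; rewrite path_col.
have -> : N.*2 = N.+1 + N.-1 by lia.
rewrite run_colseq iter_mA /= /mF /= iter_mD; last lia.
by congr (_, _); lia.
Qed.

Lemma path_lose M N b : 2 <= N -> inF N = ~~ b ->
  ~ RL col (fun n => ecol (path M N b n)).
Proof.
move=> N2 hF [[L c] HL].
have key : forall j, Defs.comp col (fun n => ecol (path M N b n)) (N.*2 + j.+1) (0, false) = (j.+2, ~~ b).
  elim=> [|j IH].
    rewrite addn1 compS path_comp2 // path2; last lia.
    by rewrite /= hF; case: b {hF HL} => /=.
  rewrite addnS compS IH pathZ; last lia.
  by case: b {hF HL IH} => /=.
have := HL (N.*2 + L.+1) ltac:(lia); rewrite key /le_Om => [[]] /=.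
  by case; lia.
lia.
Qed.

Lemma path_indep M N b b' i : i < N.*2 -> path M N b i = path M N b' i.
Proof. by move=> h; rewrite /path; case: ifP => // _; case: ifP => // _; rewrite h. Qed.

Definition rep M (c : colT) : Vt M * colT * Vt M :=
  match c with
  | Ca => (nA 0, Ca, nA 1)
  | Cf => (nA 1, Cf, nD 1)
  | Cd => (nD 0, Cd, nD 0)
  | Ct0 => (nD 1, Ct0, nZ false)
  | Ct1 => (nD 1, Ct1, nZ true)
  end.

Lemma rep_in M c : 0 < M -> rep M c \in EE M.
Proof.
move=> M0; case: c.
- by rewrite inE /= nat_inord // M0 eqxx.
- by rewrite inE /= nat_inord //; apply/orP; right; exact: eqxx.
- by rewrite inE /= nat_inord // eqxx.
- exact: (edge_t false M0).
- exact: (edge_t true M0).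
Qed.

Lemma mem_path M k (delta : 'I_k -> Vt M * colT * Vt M -> 'I_k) minit N b :
  chromatic (EE M) delta -> 2 <= N <= M ->
  foldl delta minit (mkseq (path M N b) N.*2) =
  iter N.-1 (fun y => delta y (rep M Cd)) (delta (iter N (fun y => delta y (rep M Ca)) minit) (rep M Cf)).
Proof.
move=> chr /andP [N2 NM].
have M0 : 0 < M by lia.
rewrite foldl_run (@run_ext _ _ _ delta (fun y c => delta y (rep M c)) _ (colseq N)); last first.
  move=> i y lt; apply: chr; first exact: ((path_inf b (ltac:(lia) : 2 <= N <= M)).2 i).1.
    exact: rep_in.
  by rewrite path_col //; case: (colseq N i).
have -> : N.*2 = N.+1 + N.-1 by lia.
by rewrite run_colseq.
Qed.

Theorem proposition2 :
  exists (Col : finType) (col : Col -> Omega -> Omega),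
    injective col /\ (forall c, monotone_Om (col c)) /\ ChrMem_infinite (RL col).
Proof.
exists colT, col; split; first exact: col_inj.
split; first exact: col_mono.
move=> [k [k0 Hw]].
set N1 := 2 ^ (k * k).
have N1big : k * k < N1 by exact: ltn_expl.
have kk : k <= k * k by rewrite leq_pmull.
set M := N1.*2.
have M0 : 0 < M by lia.
have [minit [delta [S [chrom [strat [[sigma Hb] opt]]]]]] := Hw (Vt M) (VPP M) (EE M) (arena_okM M0).
have Swin : winning_from (VPP M) (EE M) (RL col) S (nA 0).
  by apply: opt; exists (@Sw M); [exact: Sw_strat | exact: Sw_win].
pose da y := delta y (rep M Ca).
pose dd y := delta y (rep M Cd).
pose df y := delta y (rep M Cf).
pose memN N := iter N.-1 dd (df (iter N da minit)).
have Sval : forall N, 2 <= N <= M ->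
    S (nA 0) (mkseq (path M N false) N.*2) = sigma (memN N) (nD 1).
  move=> N hN.
  have hp := path_inf false hN.
  have hl : last_node (nA 0) (mkseq (path M N false) N.*2) = nD 1.
    by rewrite (last_mkseq _ hp) path2 //; lia.
  rewrite Hb; first by rewrite hl (mem_path _ _ chrom hN).
    exact: valid_mkseq.
  by rewrite hl inE.
have lose : forall N b, 2 <= N <= M ->
    S (nA 0) (mkseq (path M N false) N.*2) = (nD 1, tcol b, nZ b) -> inF N = ~~ b -> False.
  move=> N b hN HS hF.
  apply: (@path_lose M N b); [lia | exact: hF |].
  apply: Swin; first exact: path_inf.
  apply: path_cons => //.
  by rewrite -HS; congr (S _ _); apply: eq_in_mkseq => i lt; exact: path_indep.
have choice : forall N, 2 <= N <= M ->
    exists b, S (nA 0) (mkseq (path M N false) N.*2) = (nD 1, tcol b, nZ b).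
  move=> N hN.
  have hp := path_inf false hN.
  have hl : last_node (nA 0) (mkseq (path M N false) N.*2) = nD 1.
    by rewrite (last_mkseq _ hp) path2 //; lia.
  have [] := strat (nA 0) (mkseq (path M N false) N.*2) (valid_mkseq _ hp); first by rewrite hl inE.
  rewrite hl; case: (S _ _) => [[v c] w]; rewrite inE /esrc /= => ok ev; move: ok; rewrite ev.
  rewrite /= nat_inord; last lia.
  by case: c => //= /eqP ->; [exists false | exists true].
have [p1 hp1 P1] := iter_period da minit.
move/andP: hp1 => [p10 p1k].
rewrite card_ord in p1k P1.
set y := df (iter N1 da minit).
have [p2 hp2 P2] := iter_period dd y.
move/andP: hp2 => [p20 p2k].
rewrite card_ord in p2k P2.
set N2 := N1 + p1 * p2.
have pk : p1 * p2 <= k * k by apply: leq_mul.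
have memeq : memN N2 = memN N1.
  rewrite /memN.
  have -> : iter N2 da minit = iter N1 da minit.
    by rewrite /N2 mulnC P1 //; lia.
  rewrite -/y.
  have -> : N2.-1 = N1.-1 + p1 * p2 by rewrite /N2; lia.
  by rewrite P2 //; lia.
have hN1 : 2 <= N1 <= M by lia.
have hN2 : 2 <= N2 <= M by lia.
have [b Hc] := choice N1 hN1.
have Hc2 : S (nA 0) (mkseq (path M N2 false) N2.*2) = (nD 1, tcol b, nZ b).
  by rewrite Sval // memeq -Sval.
case: b Hc Hc2 => Hc Hc2.
- apply: (lose N2 true hN2 Hc2).
  rewrite /N2 /N1 inF_not //.
  apply/andP; split; first by rewrite muln_gt0 p10.
  exact: leq_ltn_trans pk N1big.
- apply: (lose N1 false hN1 Hc).
  exact: inF_pow.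
Qed.
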